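(* The smallest $q\in(0,1)$ for which there exists exactly one $S$-gap shift with entropy $q$ is $q=\log\lambda_{KL}\approx0.580$, where $\lambda_{KL}\approx1.787$ is the unique solution $\lambda\in(1,2)$ of $\sum_{j=1}^\infty\omega_j\lambda^{-j}=1$ and $(\omega_j)_{j\ge0}$ is the Thue–Morse sequence.
   Context: The Thue–Morse sequence $(\omega_j)_{j\ge0}$ is defined by $\omega_0=0$, $\omega_{2i}=\omega_i$ and $\omega_{2i+1}=1-\omega_i$ for $i\ge0$. For a nonempty set $S\subseteq\{0,1,2,\dots\}$, the $S$-gap shift $X(S)\subseteq\{0,1\}^{\mathbb{Z}}$ is the set of bi-infinite binary sequences in which the number of consecutive zeros between ones is always an element of $S$. The entropy of a shift $X$ is $h(X)=\lim_n\frac1n\log|\mathcal{B}_n(X)|$, where $\mathcal{B}_n(X)$ is the set of words of length $n$ occurring in points of $X$ and $\log$ is to base $2$. *)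

(* Defs.v *)
From Stdlib Require Import Reals ZArith Classical ClassicalEpsilon.
From mathcomp Require Import ssreflect ssrfun ssrbool eqtype ssrnat seq fintype tuple finset.

Set Implicit Arguments.
Unset Strict Implicit.
Unset Printing Implicit Defensive.

(* omega_0 = 0, omega_(2i) = omega_i, omega_(2i+1) = 1 - omega_i,
   computed with fuel (fuel j is enough since j./2 < j for j > 0). *)
Fixpoint tm_aux (fuel j : nat) : bool :=
  match fuel with
  | 0 => false
  | S f => if j == 0 then false
           else if odd j then ~~ tm_aux f j./2 else tm_aux f j./2
  end.

Definition thue_morse (j : nat) : nat := nat_of_bool (tm_aux j j).

(* A point is a bi-infinite binary sequence Z -> bool (true = symbol 1).
   S is a set of naturals, given as a predicate nat -> Prop. *)
Definition gap_shift (S : nat -> Prop) (x : Z -> bool) : Prop :=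
  forall i j : Z, (i < j)%Z -> x i = true -> x j = true ->
    (forall k : Z, (i < k < j)%Z -> x k = false) ->
    S (Z.to_nat (j - i - 1)).

Definition is_gap_shift (X : (Z -> bool) -> Prop) : Prop :=
  exists S : nat -> Prop, (exists s, S s) /\
    forall x, X x <-> gap_shift S x.

Definition pbool (P : Prop) : bool :=
  if excluded_middle_informative P then true else false.

Definition occurs (X : (Z -> bool) -> Prop) (n : nat) (w : n.-tuple bool) : Prop :=
  exists x, X x /\ exists i : Z, forall k : 'I_n, x (i + Z.of_nat k)%Z = tnth w k.

Definition nwords (X : (Z -> bool) -> Prop) (n : nat) : nat :=
  #|[set w : n.-tuple bool | pbool (occurs X w)]|.

Definition log2 (x : R) : R := (ln x / ln 2)%R.

Definition has_entropy (X : (Z -> bool) -> Prop) (h : R) : Prop :=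
  Un_cv (fun n => (log2 (INR (nwords X n.+1)) / INR n.+1)%R) h.

Definition unique_gap_shift_with_entropy (q : R) : Prop :=
  exists X, is_gap_shift X /\ has_entropy X q /\
    forall Y, is_gap_shift Y -> has_entropy Y q -> forall x, Y x <-> X x.

Definition TM_equation (lam : R) : Prop :=
  infinite_sum (fun j => (INR (thue_morse j.+1) / lam ^ j.+1)%R) 1%R.

(* Main.v *)
Require Import Defs.
From Stdlib Require Import Reals ZArith Lia Lra FunctionalExtensionality Classical ClassicalEpsilon PropExtensionality.
From mathcomp Require Import ssreflect ssrfun ssrbool eqtype ssrnat seq fintype tuple finset.
From mathcomp Require Import zify.
From Coquelicot Require Import Coquelicot.

Module MTM.
Local Open Scope nat_scope.

Definition sq := nat -> bool.
Definition shift (n : nat) (c : sq) : sq := fun j => c (n + j).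
Definition compl (c : sq) : sq := fun j => ~~ c j.
Definition lexlt (c d : sq) := exists m, (forall j, j < m -> c j = d j) /\ c m = false /\ d m = true.
Definition lexle (c d : sq) := c = d \/ lexlt c d.
Definition scons (b : bool) (c : sq) : sq := fun j => if j is j'.+1 then c j' else b.

Lemma tm_aux_fuel f1 f2 j : j <= f1 -> j <= f2 -> tm_aux f1 j = tm_aux f2 j.
Proof.
elim: f1 f2 j => [|f1 IH] [|f2] j h1 h2 /=; try (have -> : j = 0 by lia); try done.
case: (j =P 0) => // _.
by rewrite (IH f2 j./2) //; lia.
Qed.

Definition om (j : nat) : bool := tm_aux j j.

Lemma tm_aux_S f j : tm_aux f.+1 j = if j == 0 then false else if odd j then ~~ tm_aux f j./2 else tm_aux f j./2.
Proof. by []. Qed.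

Lemma om_rec j : 0 < j -> om j = (if odd j then ~~ om j./2 else om j./2).
Proof.
case: j => [|j] // _. rewrite /om tm_aux_S /=.
by rewrite (@tm_aux_fuel j (j.+1)./2) //; lia.
Qed.

Lemma om0 : om 0 = false. Proof. by []. Qed.
Lemma om_even i : om (i.*2) = om i.
Proof.
case: i => [|i] //. rewrite om_rec; last lia.
by rewrite odd_double doubleK.
Qed.

Lemma om_odd i : om (i.*2.+1) = ~~ om i.
Proof.
rewrite om_rec // /= odd_double /=. congr (~~ om _). lia.
Qed.

Definition mu (c : sq) : sq := fun j => if odd j then ~~ c j./2 else c j./2.
Definition t : sq := shift 1 om.

Lemma om_mu : mu om = om.
Proof.
apply: functional_extensionality => j. rewrite /mu.
case: j => [|j] //. by rewrite (@om_rec j.+1).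
Qed.

Lemma shift_shift m n c : shift m (shift n c) = shift (n + m) c.
Proof. apply: functional_extensionality => j. by rewrite /shift addnA. Qed.

Lemma shift0 c : shift 0 c = c.
Proof. by apply: functional_extensionality. Qed.

Lemma shift_even_mu n x : shift n.*2 (mu x) = mu (shift n x).
Proof.
apply: functional_extensionality => j; rewrite /shift /mu.
rewrite oddD odd_double /=. have -> : (n.*2 + j)./2 = n + j./2 by lia. done.
Qed.

Lemma shift1_mu x : shift 1 (mu x) = scons (~~ x 0) (mu (shift 1 x)).
Proof.
apply: functional_extensionality => j; rewrite /shift /mu /scons.
case: j => [|j] //=. by rewrite negbK add1n.
Qed.

Lemma compl_mu x : compl (mu x) = mu (compl x).
Proof. apply: functional_extensionality => j; rewrite /compl /mu. by case: (odd j). Qed.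

Lemma compl_compl x : compl (compl x) = x.
Proof. apply: functional_extensionality => j; by rewrite /compl negbK. Qed.

Lemma compl_scons b x : compl (scons b x) = scons (~~ b) (compl x).
Proof. apply: functional_extensionality => j; by case: j. Qed.

Lemma t_eq : t = scons true (mu t).
Proof.
rewrite /t -{1}om_mu shift1_mu. done.
Qed.

Lemma t0 : t 0 = true. Proof. by []. Qed.
Lemma t1 : t 1 = true. Proof. by []. Qed.

Lemma lexle_refl x : lexle x x. Proof. by left. Qed.

Lemma lexlt_irr x : ~ lexlt x x.
Proof. by case=> m [_ [-> ]]. Qed.

Lemma lexle_mu x y : lexle x y -> lexle (mu x) (mu y).
Proof.
case=> [->|[m [H1 [H2 H3]]]]; first by left.
right; exists m.*2; split; last by rewrite /mu odd_double doubleK H2 H3.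
move=> j hj; rewrite /mu. rewrite H1 //. lia.
Qed.

Lemma lexle_compl x y : lexle x y -> lexle (compl y) (compl x).
Proof.
case=> [->|[m [H1 [H2 H3]]]]; first by left.
right; exists m; split; last by rewrite /compl H2 H3.
move=> j hj; rewrite /compl H1 //.
Qed.

Lemma lexle_scons b x y : lexle x y -> lexle (scons b x) (scons b y).
Proof.
case=> [->|[m [H1 [H2 H3]]]]; first by left.
right; exists m.+1; split => //. by case=> [|j] //= /H1.
Qed.

Lemma lexlt_scons x y : lexlt (scons false x) (scons true y).
Proof. exists 0; split => //. Qed.

Lemma lexle_lt x y : lexlt x y -> lexle x y.
Proof. by right. Qed.

Lemma lexlt_mu_t x : lexlt (mu x) t.
Proof.
case hx: (x 0).
- exists 1; split; last by rewrite /mu /= hx.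
  move=> j hj; have -> : j = 0 by lia. by rewrite /mu /= hx.
- exists 0; split => //; by rewrite /mu /= hx.
Qed.

Lemma lexlt_ct_mu x : lexlt (compl t) (mu x).
Proof.
case hx: (x 0).
- exists 0; split => //; by rewrite /mu /= hx.
- exists 1; split; last by rewrite /mu /= hx.
  move=> j hj; have -> : j = 0 by lia. by rewrite /mu /= hx.
Qed.

Lemma even_or_odd n : exists k, n = k.*2 \/ n = k.*2.+1.
Proof. exists n./2. case h: (odd n); [right|left]; lia. Qed.

Lemma tm_lex n : lexle (compl t) (shift n om) /\ lexle (shift n om) t.
Proof.
elim/ltn_ind: n => n IH.
case: n IH => [|n] IH.
  rewrite shift0; split; right.
  - exists 1; split => //; case => //.
  - exists 0; split => //.
have [k [hk|hk]] := even_or_odd n.+1; rewrite hk.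
- rewrite -om_mu shift_even_mu. split; right; [exact: lexlt_ct_mu | exact: lexlt_mu_t].
- case: k hk => [|k] hk.
  + rewrite -/t. split; last exact: lexle_refl.
    right; exists 0; split => //.
  + have hlt : k.+2 < n.+1 by lia.
    have -> : (k.+1).*2.+1 = (k.+1).*2 + 1 by lia.
    rewrite -shift_shift -om_mu shift_even_mu shift1_mu shift_shift.
    have [IH1 IH2] := IH _ hlt.
    have e : k.+1 + 1 = k.+2 by lia. rewrite e.
    case h0: (shift k.+1 om 0) => /=.
    * split; last by right; rewrite t_eq; apply: lexlt_scons.
      rewrite t_eq compl_scons compl_mu /=. apply: lexle_scons; apply: lexle_mu.
      exact IH1.
    * split; first by right; rewrite t_eq compl_scons /=; apply: lexlt_scons.
      rewrite t_eq. apply: lexle_scons; apply: lexle_mu.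
      exact IH2.
Qed.

Lemma shift_t n : shift n t = shift n.+1 om.
Proof. by rewrite /t shift_shift add1n. Qed.

Lemma T1 n : lexle (shift n t) t.
Proof. rewrite shift_t. by case: (tm_lex n.+1). Qed.

Lemma T2 n : lexle (compl (shift n t)) t.
Proof.
rewrite shift_t. case: (tm_lex n.+1) => H _.
by move/lexle_compl: H; rewrite compl_compl.
Qed.

Lemma om_aper n : 0 < n -> ~ (forall j, 0 < j -> om (j + n) = om j).
Proof.
elim/ltn_ind: n => n IH hn H.
have [k [hk|hk]] := even_or_odd n.
- have hk0 : 0 < k by lia.
  apply: (IH k _ hk0); first lia.
  move=> j hj. rewrite -om_even -[om j]om_even. have -> : (j + k).*2 = j.*2 + n by lia.
  apply: H; lia.
- have H2 : forall j, om (j + k.+1) = ~~ om j.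
    move=> j. rewrite -om_odd -om_even. have -> : (j + k.+1).*2 = j.*2.+1 + n by lia.
    apply: H; lia.
  have H3 : forall j, 0 < j -> om (j.+1) = om j.
    move=> j hj. have h1 := H j.+1 (ltn0Sn _). have h2 := H2 (j + k.+1). 
    have h3 := H2 j. rewrite h3 negbK in h2.
    have e : j + k.+1 + k.+1 = j.+1 + n by lia. by rewrite e h1 in h2.
  have := H3 1 erefl. have := H3 2 erefl. by [].
Qed.

Lemma om_aper_c n : 0 < n -> ~ (forall j, 0 < j -> om (j + n) = ~~ om j).
Proof.
move=> hn H. apply: (@om_aper (n + n)); first lia.
move=> j hj. rewrite addnA H; last lia. by rewrite H // negbK.
Qed.

Lemma T1s n : 0 < n -> shift n t <> t.
Proof.
move=> hn e. apply: (@om_aper n hn) => j hj.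
have := f_equal (fun c => c j.-1) e. rewrite /shift /t /= /shift.
have -> : 1 + (n + j.-1) = j + n by lia. have -> : 1 + j.-1 = j by lia. done.
Qed.

Lemma T2s n : compl (shift n t) <> t.
Proof.
move=> e. case: n e => [|n] e.
  by have := f_equal (fun c => c 0) e.
apply: (@om_aper_c n.+1) => // j hj.
have := f_equal (fun c => c j.-1) e. rewrite /compl /shift /t /= /shift. 
have -> : 1 + (n.+1 + j.-1) = j + n.+1 by lia. have -> : 1 + j.-1 = j by lia.
by move=> <-; rewrite negbK.
Qed.

Lemma om_block k r : r < 2 ^ k -> om (2 ^ k + r) = ~~ om r.
Proof.
elim: k r => [|k IH] r hr.
  have -> : r = 0 by move: hr; rewrite expn0; lia. done.
have [r' [hr'|hr']] := even_or_odd r; rewrite hr'.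
- have -> : 2 ^ k.+1 + r'.*2 = (2 ^ k + r').*2 by rewrite expnS; lia.
  rewrite !om_even IH //. move: hr; rewrite expnS; lia.
- have -> : 2 ^ k.+1 + r'.*2.+1 = (2 ^ k + r').*2.+1 by rewrite expnS; lia.
  rewrite !om_odd IH //. move: hr; rewrite expnS; lia.
Qed.

Lemma lex_contra c d i : lexlt c d -> (forall j, j < i -> c j = d j) -> c i = true -> d i = false -> False.
Proof.
case=> w [H1 [H2 H3]] Ha hc hd.
case: (ltngtP w i) => h.
- by move: (Ha w h); rewrite H2 H3.
- by move: (H1 i h); rewrite hc hd.
- by move: H2; rewrite h hc.
Qed.

Lemma minimality (a : sq) :
  (forall n, a n = false -> lexlt (shift n.+1 a) a) ->
  (forall n, a n = true -> lexlt (compl (shift n.+1 a)) a) ->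
  ~ lexlt a t.
Proof.
move=> Hi Hii Hlt.
have a0 : a 0 = true.
  case h0: (a 0) => //.
  have [p hp] : exists p, a p = true.
    apply: NNPP => hn. case: (Hi 0 h0) => w [_ [_ ]].
    by move=> hw; apply: hn; exists w.
  have [q [hq hq']] : exists q, a q = true /\ forall j, j < q -> a j = false.
    elim/ltn_ind: p hp => p IHp hp.
    case: (classic (exists j, j < p /\ a j = true)) => [[j [hj hj']]|hn].
    + exact: (IHp j hj hj').
    + exists p; split => // j hj. case hh: (a j) => //. by exfalso; apply: hn; exists j.
  case: q hq hq' => [|q] hq hq'; first by rewrite hq in h0.
  exfalso; apply: (@lex_contra _ _ (0) (Hi q (hq' q (ltnSn _)))) => //.
  by rewrite /shift addn0.
have P : forall k j, j < 2 ^ k -> a j = t j.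
  elim=> [|k IHk] j.
    rewrite expn0 => hj. have -> : j = 0 by lia. by rewrite a0.
  set m := 2 ^ k.
  have hm : 0 < m by rewrite /m expn_gt0.
  have tm1 : t m.-1 = true.
    rewrite /t /shift add1n prednK //. by rewrite -[m]addn0 om_block.
  have tmi : forall i, i < m.-1 -> t (m + i) = ~~ t i.
    move=> i hi. rewrite /t /shift. have -> : 1 + (m + i) = m + i.+1 by lia.
    rewrite om_block //. lia.
  have am1 : a m.-1 = true by rewrite IHk ?tm1 //; lia.
  have H2 := Hii _ am1. rewrite prednK // in H2.
  have A : forall i, i < m.-1 -> a (m + i) = ~~ a i.
    elim/ltn_ind=> i IHi hi.
    case e: (a (m + i) == ~~ a i); first by apply/eqP.
    have e' : a (m + i) = a i by move: e; case: (a (m+i)); case: (a i).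
    case ai: (a i).
    + exfalso; apply: (@lex_contra _ _ (m + i) Hlt).
      * move=> j' hj. case: (ltnP j' m) => hjm; first (apply: IHk; lia).
        have -> : j' = m + (j' - m) by lia.
        rewrite IHi; try lia. rewrite tmi; try lia. rewrite IHk //. lia.
      * by rewrite e'.
      * by rewrite tmi // -IHk ?ai //; lia.
    + exfalso; apply: (@lex_contra _ _ (i) H2).
      * move=> j' hj. rewrite /compl /shift IHi ?negbK //; lia.
      * by rewrite /compl /shift e' ai.
      * done.
  case a2m: (a (m + m.-1)).
  + move=> hj. case: (ltnP j m) => hjm; first exact: IHk.
    case: (ltnP j (m + m.-1)) => hj2.
    * have -> : j = m + (j - m) by lia. rewrite A; last lia. rewrite tmi; last lia.
      rewrite IHk //; lia.
    * have -> : j = m + m.-1 by move: hj; rewrite expnS -/m; lia.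
      rewrite a2m /t /shift. have -> : 1 + (m + m.-1) = m.*2 by lia.
      by rewrite om_even -[m]addn0 om_block.
  + exfalso.
    have H1 := Hi _ a2m. have e2 : (m + m.-1).+1 = m + m by lia. rewrite e2 in H1.
    have B : forall j, a (m + j) = ~~ a j.
      elim/ltn_ind=> i IHi.
      case: (ltnP i m.-1) => hi; first exact: A.
      case: (ltnP i m) => hi2.
        have -> : i = m.-1 by lia. by rewrite a2m am1.
      case e: (a (m + i) == ~~ a i); first by apply/eqP.
      have e' : a (m + i) = a i by move: e; case: (a (m+i)); case: (a i).
      have ai : a i = ~~ a (i - m). have := IHi (i - m). have -> : m + (i - m) = i by lia.
        move=> h; apply: h; lia.
      case aim: (a (i - m)).
      + exfalso; apply: (@lex_contra _ _ i H2).
        * move=> j' hj. rewrite /compl /shift IHi ?negbK //.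
        * by rewrite /compl /shift e' ai aim.
        * by rewrite ai aim.
      + exfalso; apply: (@lex_contra _ _ (i - m) H1).
        * move=> j' hj. rewrite /shift. have -> : m + m + j' = m + (m + j') by lia.
          rewrite IHi; last lia. rewrite IHi ?negbK //; lia.
        * rewrite /shift. have -> : m + m + (i - m) = m + i by lia. by rewrite e' ai aim.
        * done.
    have ea : shift (m + m) a = a.
      apply: functional_extensionality => j'. rewrite /shift.
      have -> : m + m + j' = m + (m + j') by lia. by rewrite !B negbK.
    rewrite ea in H1. exact: (@lexlt_irr _ H1).
have ea : a = t.
  apply: functional_extensionality => j. apply: (P j). exact: ltn_expl.
rewrite ea in Hlt. exact: (@lexlt_irr _ Hlt).
Qed.

Lemma lex_trich c d : c = d \/ lexlt c d \/ lexlt d c.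
Proof.
case: (classic (c = d)) => [->|hne]; first by left.
right.
have [p hp] : exists p, c p <> d p.
  apply: NNPP => hn. apply: hne. apply: functional_extensionality => j.
  apply: NNPP => hj. apply: hn. by exists j.
have [q [hq hq']] : exists q, c q <> d q /\ forall j, j < q -> c j = d j.
  elim/ltn_ind: p hp => p IHp hp.
  case: (classic (exists j, j < p /\ c j <> d j)) => [[j [hj hj']]|hn].
  + exact: (IHp j hj hj').
  + exists p; split => // j hj. apply: NNPP => h. apply: hn; by exists j.
case hc: (c q); case hd: (d q); rewrite hc hd in hq => //.
- right; exists q; split => // j hj; by rewrite hq'.
- left; exists q; split => //.
Qed.

End MTM.
Import MTM.

Module MVal.
Local Open Scope nat_scope.

Local Open Scope R_scope.

Definition term (l : R) (c : sq) (j : nat) : R := if c j then / l ^ j.+1 else 0.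
Definition val (l : R) (c : sq) : R := Series (term l c).

Fixpoint psum (l : R) (c : sq) (m : nat) : R :=
  match m with 0 => 0 | S m' => psum l c m' + term l c m' end.

Section V.
Variable l : R.
Hypothesis hl : 1 < l.

Lemma l_pos : 0 < l. Proof. lra. Qed.

Lemma pow_pos' n : 0 < l ^ n. Proof. apply: pow_lt; lra. Qed.

Lemma geom_term j : / l ^ j.+1 = (/ l) ^ j * / l.
Proof. rewrite -pow_inv /= Rmult_comm. done. Qed.

Lemma inv_l_lt1 : Rabs (/ l) < 1.
Proof.
rewrite Rabs_pos_eq; last (apply: Rlt_le; apply: Rinv_0_lt_compat; lra).
rewrite -Rinv_1. apply: Rinv_lt_contravar; lra.
Qed.

Lemma ex_geom : ex_series (fun j => / l ^ j.+1).
Proof.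
apply: (ex_series_ext (fun j => scal (/ l) ((/ l) ^ j))).
  move=> j. rewrite geom_term /scal /= /mult /=. lra.
apply: ex_series_scal_l. exists (/ (1 - / l)). apply: is_series_geom. exact: inv_l_lt1.
Qed.

Lemma val_geom : Series (fun j => / l ^ j.+1) = / (l - 1).
Proof.
rewrite (Series_ext _ (fun j => / l * (/ l) ^ j)); last first.
  move=> j; rewrite geom_term; lra.
rewrite Series_scal_l Series_geom; last exact: inv_l_lt1.
have hl0 : l <> 0 by lra.
have h1 : 1 - / l <> 0. have : / l < 1 by have := inv_l_lt1; rewrite Rabs_pos_eq; [lra| apply: Rlt_le; apply: Rinv_0_lt_compat; lra]. lra.
rewrite -Rinv_mult. congr Rinv. field. lra.
Qed.

Lemma term_bounds c j : 0 <= term l c j <= / l ^ j.+1.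
Proof.
rewrite /term; case: (c j); split; try lra.
all: apply: Rlt_le; apply: Rinv_0_lt_compat; apply: pow_pos'.
Qed.

Lemma ex_val c : ex_series (term l c).
Proof.
apply: (ex_series_le _ (fun j => / l ^ j.+1)); last exact: ex_geom.
move=> j. rewrite /norm /= /abs /=. rewrite Rabs_pos_eq; by case: (term_bounds c j).
Qed.

Lemma val_bounds c : 0 <= val l c <= / (l - 1).
Proof.
split.
- rewrite /val. 
  have -> : 0 = Series (fun n => 0 * term l c n) by rewrite Series_scal_l; lra.
  apply: Series_le; last exact: ex_val. move=> n; case: (term_bounds c n); lra.
- rewrite -val_geom. apply: Series_le; last exact: ex_geom. exact: term_bounds.
Qed.

Lemma val_step c : val l c = (if c O then / l else 0) + / l * val l (shift 1 c).
Proof.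
rewrite /val Series_incr_1; last exact: ex_val.
rewrite -Series_scal_l. congr Rplus.
  rewrite /term pow_1. done.
apply: Series_ext => k. rewrite /term /shift add1n.
case: (c k.+1) => //; last lra.
rewrite [l ^ k.+2]/= Rinv_mult. done.
Qed.

Lemma psum_nonneg c m : 0 <= psum l c m.
Proof. elim: m => [|m IH] /=; first lra. have := term_bounds c m. lra. Qed.

Lemma val_decomp c m : val l c = psum l c m + / l ^ m * val l (shift m c).
Proof.
elim: m => [|m IH].
  rewrite shift0 /= Rinv_1. lra.
rewrite IH (val_step (shift m c)) shift_shift /shift addn0 /= /term.
have -> : (m + 1)%N = m.+1 by lia.
rewrite [l ^ m.+1]/= Rinv_mult.
case: (c m); rewrite -/(shift m.+1 c); ring.
Qed.

Lemma val_split c m : val l c = psum l c m + / l ^ m.+1 * ((if c m then 1 else 0) + val l (shift m.+1 c)).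
Proof.
rewrite (val_decomp c m) (val_step (shift m c)) shift_shift /shift addn0.
have -> : (m + 1)%N = m.+1 by lia.
rewrite [l ^ m.+1]/= Rinv_mult. case: (c m); ring.
Qed.

Lemma psum_ext c d m : (forall j, (j < m)%N -> c j = d j) -> psum l c m = psum l d m.
Proof.
elim: m => [|m IH] H //=. rewrite IH; last (move=> j hj; apply: H; lia).
rewrite /term H //.
Qed.

Lemma val_compl c : val l c + val l (compl c) = / (l - 1).
Proof.
rewrite /val -Series_plus; try exact: ex_val.
rewrite -val_geom. apply: Series_ext => j. rewrite /term /compl. by case: (c j) => /=; lra.
Qed.

Lemma psum_le_val c m : psum l c m <= val l c.
Proof.
rewrite (val_decomp c m). have := val_bounds (shift m c).
have := pow_pos' m. move=> hp [h1 h2].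
have : 0 <= / l ^ m * val l (shift m c). apply: Rmult_le_pos => //. apply: Rlt_le; exact: Rinv_0_lt_compat.
lra.
Qed.

Lemma val_pos c j : c j = true -> 0 < val l c.
Proof.
move=> hc. apply: (Rlt_le_trans _ (psum l c j.+1)); last exact: psum_le_val.
rewrite /= /term hc. have := psum_nonneg c j. have := Rinv_0_lt_compat _ (pow_pos' j.+1). lra.
Qed.

Lemma val_diff c d m : (forall j, (j < m)%N -> c j = d j) -> c m = true -> d m = false ->
  val l c - val l d = / l ^ m.+1 * (1 + val l (shift m.+1 c) - val l (shift m.+1 d)).
Proof.
move=> H hc hd. rewrite (val_split c m) (val_split d m) (psum_ext _ _ _ H) hc hd. ring.
Qed.

Lemma bernoulli n : 1 + INR n * (l - 1) <= l ^ n.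
Proof. have := Rle_pow_lin (l - 1) n. have -> : 1 + (l - 1) = l by ring. apply; lra. Qed.

Lemma pow_unbounded M : exists n, M < l ^ n.
Proof.
have [n hn] : exists n, M / (l - 1) < INR n.
  have [hk _] := archimed (M / (l - 1)). exists (Z.to_nat (up (M / (l - 1)))).
  case: (Z_le_gt_dec 0 (up (M / (l - 1)))) => hz.
  + rewrite INR_IZR_INZ Z2Nat.id //.
  + have := pos_INR (Z.to_nat (up (M / (l - 1)))). 
    have : IZR (up (M / (l - 1))) < 0 by apply: IZR_lt; lia. lra.
exists n. have := bernoulli n. 
have : M < INR n * (l - 1). 
  have h := Rmult_lt_compat_r (l - 1) _ _ ltac:(lra) hn. rewrite /Rdiv Rmult_assoc Rinv_l in h; lra.
lra.
Qed.

Lemma pow_ge_l m : l <= l ^ m.+1.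
Proof.
rewrite /=. have := pow_R1_Rle l m ltac:(lra). nra.
Qed.

Definition adm (a c : sq) := forall k, lexle (shift k c) a.

Lemma adm_shift a c m : adm a c -> adm a (shift m c).
Proof. move=> H k. rewrite shift_shift. apply: H. Qed.

Lemma adm_le a : val l a = 1 -> forall c, adm a c -> val l c <= 1.
Proof.
move=> ha c Hc. apply: Rnot_lt_le => hc.
have step : forall c', adm a c' -> 1 < val l c' ->
   exists c'', adm a c'' /\ l * (val l c' - 1) <= val l c'' - 1.
  move=> c' Hc' h1. case: (Hc' 0%N); rewrite shift0.
  - move=> e'; rewrite e' in h1; lra.
  - case=> m [H1 [H2 H3]]. exists (shift m.+1 c'). split; first exact: adm_shift.
    have := val_diff a c' m (fun j hj => esym (H1 j hj)) H3 H2.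
    rewrite ha. set D := 1 + _ - _. move=> hD.
    have hp := pow_pos' m.+1.
    have eD : D = l ^ m.+1 * (1 - val l c'). rewrite hD. field. lra.
    have hs := val_bounds (shift m.+1 a).
    have := pow_ge_l m. rewrite /D in eD. nra.
have iter : forall N, exists c', adm a c' /\ l ^ N * (val l c - 1) <= val l c' - 1.
  elim=> [|N [c' [Hc' h]]]; first by exists c; split => //; rewrite /=; lra.
  have hp := pow_pos' N.
  have h1 : 1 < val l c'. have : 0 < l ^ N * (val l c - 1) by apply: Rmult_lt_0_compat; lra. lra.
  have [c'' [Hc'' h2]] := step c' Hc' h1. exists c''; split => //.
  rewrite /=. nra.
have [N hN] := pow_unbounded (/ (l - 1) / (val l c - 1)).
have [c' [_ h]] := iter N.
have := val_bounds c'.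
have : / (l - 1) < l ^ N * (val l c - 1).
  have h0 : 0 < val l c - 1 by lra.
  have := Rmult_lt_compat_r _ _ _ h0 hN. rewrite /Rdiv Rmult_assoc Rinv_l; lra.
have : 0 < / (l - 1) by apply: Rinv_0_lt_compat; lra.
lra.
Qed.

Lemma adm_lt a : val l a = 1 -> (forall m, 0 < val l (shift m a)) ->
  forall c, adm a c -> c <> a -> val l c < 1.
Proof.
move=> ha hpos c Hc hne. case: (Hc 0%N); rewrite shift0; first done.
case=> m [H1 [H2 H3]].
have := val_diff a c m (fun j hj => esym (H1 j hj)) H3 H2.
rewrite ha. have := adm_le a ha (shift m.+1 c) (adm_shift _ _ _ Hc).
have := hpos m.+1. have := Rinv_0_lt_compat _ (pow_pos' m.+1). nra.
Qed.
End V.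

Lemma psum_mono l l' c m : 1 < l <= l' -> psum l' c m <= psum l c m.
Proof.
move=> hl. elim: m => [|m IH] /=; first lra.
suff : term l' c m <= term l c m by lra.
rewrite /term; case: (c m); last lra.
apply: Rinv_le_contravar; first by apply: pow_lt; lra.
apply: pow_incr; lra.
Qed.

Lemma val_mono l l' c : 1 < l <= l' -> val l' c <= val l c.
Proof.
move=> hl. apply: Series_le; last by apply: ex_val; lra.
move=> n. split; first by case: (term_bounds l' ltac:(lra) c n).
rewrite /term; case: (c n); last lra.
apply: Rinv_le_contravar; first by apply: pow_lt; lra.
apply: pow_incr; lra.
Qed.

Lemma val_strict l l' c j : 1 < l < l' -> c j = true -> val l' c < val l c.
Proof.
move=> hl hc.
rewrite (val_split l ltac:(lra) c j) (val_split l' ltac:(lra) c j) hc.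
have h1 := psum_mono l l' c j ltac:(lra).
have h2 := val_mono l l' (shift j.+1 c) ltac:(lra).
have h3 : / l' ^ j.+1 < / l ^ j.+1.
  apply: Rinv_lt_contravar. apply: Rmult_lt_0_compat; apply: pow_lt; lra.
  rewrite /=; have := pow_incr l l' j ltac:(lra); have := pow_lt l j ltac:(lra); nra.
have h4 := val_bounds l' ltac:(lra) (shift j.+1 c).
have h5 : 0 < / l' ^ j.+1 by apply: Rinv_0_lt_compat; apply: pow_lt; lra.
nra.
Qed.

Lemma val_lip l l' c : 1 < l <= l' -> val l c - val l' c <= / (l - 1) - / (l' - 1).
Proof.
move=> hl.
have h1 := val_compl l ltac:(lra) c. have h2 := val_compl l' ltac:(lra) c.
have := val_mono l l' (compl c) hl. lra.
Qed.

Section Greedy.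
Variable l : R.
Hypothesis hl : 1 < l <= 2.

Fixpoint grem (x : R) (n : nat) : R :=
  match n with
  | 0 => x
  | S n' => grem x n' - (if Rle_dec (/ l ^ n'.+1) (grem x n') then / l ^ n'.+1 else 0)
  end.
Definition gdig x : sq := fun n => if Rle_dec (/ l ^ n.+1) (grem x n) then true else false.

Lemma grem_inv x : 0 <= x <= / (l - 1) -> forall n, 0 <= grem x n <= / l ^ n * / (l - 1).
Proof.
move=> hx. elim=> [|n IH] /=; first by rewrite Rinv_1; lra.
have hp := pow_lt l n ltac:(lra).
have hi : 0 < / l ^ n by apply: Rinv_0_lt_compat.
have hl1 : 0 < / (l - 1) by apply: Rinv_0_lt_compat; lra.
have e1 : / (l * l ^ n) = / l * / l ^ n by rewrite Rinv_mult.
rewrite e1.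
have hil : / l * l = 1 by field; lra.
have hil1 : / (l - 1) * (l - 1) = 1 by field; lra.
case: Rle_dec => h.
- rewrite /=. split; first lra.
  have : / l ^ n * / (l - 1) - / l * / l ^ n = / l * / l ^ n * / (l - 1). field. lra. lra.
- rewrite /=. split; first lra.
  have : / l * / l ^ n <= / l * / l ^ n * / (l - 1).
    have : 1 <= / (l - 1). rewrite -Rinv_1. apply: Rinv_le_contravar; lra.
    have : 0 < / l * / l ^ n. apply: Rmult_lt_0_compat => //. apply: Rinv_0_lt_compat; lra.
    nra.
  lra.
Qed.

Lemma psum_grem x n : psum l (gdig x) n = x - grem x n.
Proof.
elim: n => [|n IH] /=; first lra.
rewrite IH /term /gdig. case: Rle_dec => h /=; lra.
Qed.

Lemma greedy x : 0 <= x <= / (l - 1) -> exists c, val l c = x.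
Proof.
move=> hx. exists (gdig x).
apply: NNPP => hne.
have hd : 0 < Rabs (val l (gdig x) - x).
  apply: Rabs_pos_lt. lra.
have hl1 : 0 < / (l - 1) by apply: Rinv_0_lt_compat; lra.
have [n hn] := pow_unbounded l ltac:(lra) (2 * / (l - 1) / Rabs (val l (gdig x) - x)).
have e := val_decomp l ltac:(lra) (gdig x) n.
rewrite psum_grem in e.
have h1 := grem_inv x hx n.
have h2 := val_bounds l ltac:(lra) (shift n (gdig x)).
have hp := pow_lt l n ltac:(lra).
have hi : 0 < / l ^ n by apply: Rinv_0_lt_compat.
have h3 : Rabs (val l (gdig x) - x) <= 2 * / l ^ n * / (l - 1).
  rewrite e. apply: Rabs_le. split; nra.
have : 2 * / (l - 1) < l ^ n * Rabs (val l (gdig x) - x).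
  have := Rmult_lt_compat_r _ _ _ hd hn. rewrite /Rdiv Rmult_assoc Rinv_l; lra.
have : l ^ n * (2 * / l ^ n * / (l - 1)) = 2 * / (l - 1). field. lra.
nra.
Qed.
End Greedy.

End MVal.
Import MVal.

Module MKL.
Local Open Scope nat_scope.

Lemma t_ones m : exists j, (m <= j)%N /\ t j = true.
Proof.
exists (2 ^ m).-1. split.
  have := ltn_expl m (isT : (1 < 2)%N). lia.
rewrite /t /shift add1n prednK; last by rewrite expn_gt0.
rewrite /t /shift. have h := om_block m 0 (expn_gt0 _ _). rewrite addn0 in h. by rewrite h.
Qed.

Local Open Scope R_scope.

Lemma val_t_shift_pos l m : 1 < l -> 0 < val l (shift m t).
Proof.
move=> hl. have [j [hj ht]] := t_ones m.
apply: (val_pos l hl _ (j - m)). rewrite /shift. have -> : (m + (j - m))%N = j by lia. done.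
Qed.

Lemma shift_compl k c : shift k (compl c) = compl (shift k c).
Proof. by []. Qed.

Lemma adm_t_shift n : adm t (shift n t).
Proof. move=> k. rewrite shift_shift. exact: T1. Qed.

Lemma adm_t_cshift n : adm t (compl (shift n t)).
Proof. move=> k. rewrite shift_compl shift_shift. exact: T2. Qed.

Lemma t_unique L : 1 < L -> val L t = 1 -> forall c, val L c = 1 -> c = t.
Proof.
move=> hL ht c hc.
have hpos := fun m => val_t_shift_pos L m hL.
case: (lex_trich c t) => [//|[[m [H1 [H2 H3]]]|[m [H1 [H2 H3]]]]].
-
  have := val_diff L hL t c m (fun j hj => esym (H1 j hj)) H3 H2.
  rewrite ht hc Rminus_diag => h0.
  have hp : 0 < / L ^ m.+1 by apply: Rinv_0_lt_compat; apply: pow_lt; lra.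
  have e : val L (shift m.+1 c) = 1 + val L (shift m.+1 t).
    have := Rmult_integral _ _ (esym h0). case=> h; lra.
  have hb := val_bounds L hL (shift m.+1 c).
  have hcm := val_compl L hL (shift m.+1 t).
  have := adm_lt L hL t ht hpos (compl (shift m.+1 t)) (adm_t_cshift _) (@T2s _).
  lra.
-
  have := val_diff L hL c t m (fun j hj => esym (H1 j hj)) H3 H2.
  rewrite ht hc Rminus_diag => h0.
  have e : val L (shift m.+1 t) = 1 + val L (shift m.+1 c).
    have := Rmult_integral _ _ (esym h0). case=> h.
    + have : 0 < / L ^ m.+1 by apply: Rinv_0_lt_compat; apply: pow_lt; lra. lra.
    + lra.
  have hb := val_bounds L hL (shift m.+1 c).
  have := adm_lt L hL t ht hpos (shift m.+1 t) (adm_t_shift _) (@T1s _ (ltn0Sn _)).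
  lra.
Qed.

Definition splice (c : sq) (n : nat) (b : bool) (g : sq) : sq :=
  fun j => if (j < n)%N then c j else if j == n then b else g (j - n.+1)%N.

Lemma splice_val l c n b g : 1 < l ->
  val l (splice c n b g) = psum l c n + / l ^ n.+1 * ((if b then 1 else 0) + val l g).
Proof.
move=> hl. rewrite (val_split l hl _ n).
rewrite (psum_ext l _ c n); last by move=> j hj; rewrite /splice hj.
have -> : splice c n b g n = b by rewrite /splice ltnn eqxx.
have -> : shift n.+1 (splice c n b g) = g.
  apply: functional_extensionality => j. rewrite /splice /shift.
  have -> : (n.+1 + j < n)%N = false by lia.
  have -> : ((n.+1 + j)%N == n) = false by lia.
  congr g; lia.
done.
Qed.

Lemma splice_n c n b g : splice c n b g n = b.
Proof. by rewrite /splice ltnn eqxx. Qed.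

Section NonUnique.
Variables (l L : R).
Hypothesis hl : 1 < l.
Hypothesis hlL : l < L.
Hypothesis hL2 : L <= 2.
Hypothesis hLt : val L t = 1.
Variable c : sq.
Hypothesis hc : val l c = 1.
Hypothesis U : forall d, val l d = 1 -> d = c.

Lemma hl2 : 1 < l <= 2. Proof. lra. Qed.

Lemma condG n : c n = false -> val l (shift n.+1 c) < 1.
Proof.
move=> hcn. apply: Rnot_le_lt => h.
have hb := val_bounds l hl (shift n.+1 c).
have [g hg] := greedy l hl2 (val l (shift n.+1 c) - 1) ltac:(lra).
have := U (splice c n true g).
rewrite splice_val // hg.
have e := val_split l hl c n. rewrite hcn hc in e.
move=> h'. have := h' ltac:(rewrite [in RHS]e; ring).
move=> e2. have := splice_n c n true g. by rewrite e2 hcn.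
Qed.

Lemma condL n : c n = true -> val l (compl (shift n.+1 c)) < 1.
Proof.
move=> hcn. apply: Rnot_le_lt => h.
have hb := val_bounds l hl (shift n.+1 c).
have hcc := val_compl l hl (shift n.+1 c).
have [g hg] := greedy l hl2 (1 + val l (shift n.+1 c)) ltac:(lra).
have := U (splice c n false g).
rewrite splice_val // hg.
have e := val_split l hl c n. rewrite hcn hc in e.
move=> h'. have := h' ltac:(rewrite [in RHS]e; ring).
move=> e2. have := splice_n c n false g. by rewrite e2 hcn.
Qed.

Lemma condi n : c n = false -> lexlt (shift n.+1 c) c.
Proof.
move=> hcn. have hG := condG n hcn.
case: (lex_trich (shift n.+1 c) c) => [e|[//|[m [H1 [H2 H3]]]]].
  rewrite e hc in hG; lra.
have := val_diff l hl _ _ m (fun j hj => esym (H1 j hj)) H3 H2.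
have := condG m H2.
have := val_bounds l hl (shift m.+1 (shift n.+1 c)).
have : 0 < / l ^ m.+1 by apply: Rinv_0_lt_compat; apply: pow_lt; lra.
rewrite hc. nra.
Qed.

Lemma condii n : c n = true -> lexlt (compl (shift n.+1 c)) c.
Proof.
move=> hcn. have hL' := condL n hcn.
case: (lex_trich (compl (shift n.+1 c)) c) => [e|[//|[m [H1 [H2 H3]]]]].
  rewrite e hc in hL'; lra.
have := val_diff l hl _ _ m (fun j hj => esym (H1 j hj)) H3 H2.
have := condG m H2.
have := val_bounds l hl (shift m.+1 (compl (shift n.+1 c))).
have : 0 < / l ^ m.+1 by apply: Rinv_0_lt_compat; apply: pow_lt; lra.
rewrite hc. nra.
Qed.

Lemma nonunique_false : False.
Proof.
have hL : 1 < L by lra.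
have nlt := minimality c condi condii.
case: (lex_trich c t) => [e|[//|[m [H1 [H2 H3]]]]].
  have hc2 := hc. rewrite e in hc2.
  have [j [_ hj]] := t_ones 0.
  have := val_strict l L t j ltac:(lra) hj. lra.
have := val_diff L hL c t m (fun j hj => esym (H1 j hj)) H3 H2.
have := adm_le L hL t hLt (shift m.+1 t) (adm_t_shift _).
have := val_bounds L hL (shift m.+1 c).
have : 0 < / L ^ m.+1 by apply: Rinv_0_lt_compat; apply: pow_lt; lra.
rewrite hLt => h1 h2 h3 h4.
have : 1 <= val L c by nra.
have := val_strict l L c m ltac:(lra) H3. lra.
Qed.
End NonUnique.

End MKL.
Import MKL.

Module MLam.
Local Open Scope nat_scope.

Local Open Scope R_scope.

Lemma TM_iff l : 1 < l -> (TM_equation l <-> val l t = 1).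
Proof.
move=> hl. rewrite /TM_equation -is_series_Reals.
have ext : forall j, INR (thue_morse j.+1) / l ^ j.+1 = term l t j.
  move=> j. rewrite /thue_morse /term /t /shift /om. 
  have -> : (1 + j)%N = j.+1 by []. case: (tm_aux j.+1 j.+1) => /=; lra.
split.
- move=> h. rewrite /val. apply: is_series_unique. exact: (is_series_ext _ _ _ ext h).
- move=> h. apply: (is_series_ext _ _ _ (fun j => esym (ext j))).
  rewrite -h. apply: Series_correct. exact: ex_val.
Qed.

Lemma t2 : t 2%nat = false. Proof. by []. Qed.
Lemma t3 : t 3%nat = true. Proof. by []. Qed.

Lemma f32 : 1 < val (3/2) t.
Proof.
apply: (Rlt_le_trans _ (psum (3/2) t 2%nat)); last by apply: psum_le_val; lra.
rewrite /= /term t0 t1 /=. lra.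
Qed.

Lemma f2 : val 2 t < 1.
Proof.
rewrite (val_decomp 2 ltac:(lra) t 4%nat).
have := val_bounds 2 ltac:(lra) (shift 4%nat t).
rewrite /= /term t0 t1 t2 t3 /=. lra.
Qed.

Lemma inv_diff a b : 3/2 <= a -> a <= b -> / (a - 1) - / (b - 1) <= 4 * (b - a).
Proof.
move=> ha hb.
have e : / (a - 1) - / (b - 1) = (b - a) / ((a - 1) * (b - 1)) by field; lra.
rewrite e. have hp : 1/4 <= (a - 1) * (b - 1) by nra.
apply: (Rmult_le_reg_r ((a - 1) * (b - 1))); first nra.
rewrite /Rdiv Rmult_assoc Rinv_l; nra.
Qed.

Lemma lamKL_exists : exists L, 3/2 <= L < 2 /\ val L t = 1.
Proof.
set E := fun l => 3/2 <= l <= 2 /\ 1 <= val l t.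
have hb : bound E by exists 2 => x [[_ h] _].
have hne : exists x, E x by exists (3/2); split; [lra | have := f32; lra].
have [L [HU HL]] := completeness E hb hne.
have hL1 : 3/2 <= L by apply: HU; split; [lra | have := f32; lra].
have hL2 : L <= 2 by apply: HL => x [[_ h] _].
have mono : forall a b, 1 < a <= b -> val b t <= val a t by move=> a b h; apply: val_mono.
case: (Rtotal_order (val L t) 1) => [hlt|[heq|hgt]].
- (* val L t < 1 : find smaller upper bound *)
  have hL3 : 3/2 < L.
    case: (Req_dec L (3/2)) => e; last lra. rewrite e in hlt. have := f32. lra.
  set d := Rmin (L - 3/2) ((1 - val L t) / 8).
  have hd : 0 < d by apply: Rmin_pos; lra.
  have hd1 : d <= L - 3/2 by apply: Rmin_l.
  have hd2 : d <= (1 - val L t) / 8 by apply: Rmin_r.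
  have hv : val (L - d) t < 1.
    have := val_lip (L - d) L t ltac:(lra). have := inv_diff (L - d) L ltac:(lra) ltac:(lra). lra.
  have : L <= L - d.
    apply: HL => x [[hx1 hx2] hx3]. apply: Rnot_lt_le => hx.
    have := mono (L - d) x ltac:(lra). lra.
  lra.
- exists L; split => //. split => //. case: (Req_dec L 2) => e; last lra.
  rewrite e in heq. have := f2. lra.
- have hL3 : L < 2.
    case: (Req_dec L 2) => e; last lra. rewrite e in hgt. have := f2. lra.
  set d := Rmin (2 - L) ((val L t - 1) / 8).
  have hd : 0 < d by apply: Rmin_pos; lra.
  have hd1 : d <= 2 - L by apply: Rmin_l.
  have hd2 : d <= (val L t - 1) / 8 by apply: Rmin_r.
  have : E (L + d).
    split; first lra.
    have := val_lip L (L + d) t ltac:(lra). have := inv_diff L (L + d) ltac:(lra) ltac:(lra). lra.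
  move/HU. lra.
Qed.

End MLam.
Import MLam.

Module MCount.
Local Open Scope nat_scope.

Definition cnt (p : seq bool -> bool) (n : nat) : nat := #|[set w : n.-tuple bool | p w]|.

Lemma tuple0_nil (w : 0.-tuple bool) : eqtype.val w = [::].
Proof. by case: w => [[|]]. Qed.

Lemma cnt_0 p : cnt p 0 = p [::].
Proof.
rewrite /cnt. case hp: (p [::]).
- have -> : [set w : 0.-tuple bool | p w] = setT.
    apply/setP => w. by rewrite !inE tuple0_nil hp.
  by rewrite cardsT card_tuple.
- have -> : [set w : 0.-tuple bool | p w] = set0.
    apply/setP => w. by rewrite !inE tuple0_nil hp.
  by rewrite cards0.
Qed.

Lemma cons_inj n (b : bool) : injective (fun w : n.-tuple bool => [tuple of b :: w]).
Proof. move=> w1 w2 /(f_equal eqtype.val) /= [] e. by apply: val_inj. Qed.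

Lemma cnt_S p n : cnt p n.+1 = cnt (fun w => p (true :: w)) n + cnt (fun w => p (false :: w)) n.
Proof.
rewrite /cnt.
set T := (fun w : n.-tuple bool => [tuple of true :: w]) @: [set w : n.-tuple bool | p (true :: w)].
set F := (fun w : n.-tuple bool => [tuple of false :: w]) @: [set w : n.-tuple bool | p (false :: w)].
have -> : [set w : n.+1.-tuple bool | p w] = T :|: F.
  apply/setP => w. rewrite !inE. apply/idP/idP.
  - move=> hw. rewrite [w]tuple_eta in hw *. case hb: (thead w).
    + apply/orP; left. apply/imsetP. exists (behead_tuple w) => //. by rewrite inE -hb.
    + apply/orP; right. apply/imsetP. exists (behead_tuple w) => //. by rewrite inE -hb.
  - case/orP => /imsetP [w' hw' ->]; by move: hw'; rewrite inE.
rewrite cardsU.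
have -> : T :&: F = set0.
  apply/setP => w. rewrite !inE. apply/negP => /andP [/imsetP [w1 _ ->] /imsetP [w2 _ e]].
  by move/(f_equal eqtype.val): e => /= [].
rewrite cards0 subn0 !card_imset //; exact: cons_inj.
Qed.

Lemma cnt_ext p q n : (forall w, p w = q w) -> cnt p n = cnt q n.
Proof. move=> H. rewrite /cnt. have -> : [set w : n.-tuple bool | p w] = [set w : n.-tuple bool | q w] by apply/setP => w; rewrite !inE H. done. Qed.

Lemma cnt_false n : cnt (fun _ => false) n = 0.
Proof. rewrite /cnt. apply/eqP. rewrite cards_eq0. apply/eqP. apply/setP => w. by rewrite !inE. Qed.

Fixpoint vB (P : nat -> bool) (d : nat) (w : seq bool) : bool :=
  match w with [::] => true | b :: w' => if b then P d && vB P 0 w' else vB P d.+1 w' end.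
Fixpoint vZ (P : nat -> bool) (w : seq bool) : bool :=
  match w with [::] => true | b :: w' => if b then vB P 0 w' else vZ P w' end.

Lemma cntB_S P d n : cnt (vB P d) n.+1 = cnt (vB P d.+1) n + (if P d then cnt (vB P 0) n else 0).
Proof.
rewrite cnt_S addnC /=. congr (_ + _).
case: (P d) => /=. by apply: cnt_ext. by rewrite cnt_false.
Qed.

Lemma cntZ_S P n : cnt (vZ P) n.+1 = cnt (vB P 0) n + cnt (vZ P) n.
Proof. by rewrite cnt_S. Qed.

Lemma cntB_0 P d : cnt (vB P d) 0 = 1. Proof. by rewrite cnt_0. Qed.
Lemma cntZ_0 P : cnt (vZ P) 0 = 1. Proof. by rewrite cnt_0. Qed.

Section Sem.
Variable S : nat -> Prop.
Definition P := fun s => pbool (S s).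

Lemma pboolP (Q : Prop) : pbool Q = true <-> Q.
Proof. rewrite /pbool. case: excluded_middle_informative => //. Qed.

Definition valid (w : seq bool) : Prop :=
  forall a b, a < b -> b < size w -> nth false w a -> nth false w b ->
   (forall k, a < k -> k < b -> nth false w k = false) -> S (b - a - 1).

Definition firstc (d : nat) (w : seq bool) : Prop :=
  forall b, b < size w -> nth false w b -> (forall k, k < b -> nth false w k = false) -> S (d + b).

Lemma valid_nil : valid [::].
Proof. by move=> a b _ /=. Qed.

Lemma valid_false w : valid (false :: w) <-> valid w.
Proof.
split.
- move=> H a b hab hb ha hb' hk. have := H a.+1 b.+1 hab hb ha hb'.
  have -> : b.+1 - a.+1 - 1 = b - a - 1 by lia. apply.
  move=> k h1 h2. case: k h1 h2 => [|k] h1 h2 //=. apply: hk; lia.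
- move=> H [|a] [|b] hab hb ha hb' hk //=.
  have := H a b hab hb ha hb'. have -> : b.+1 - a.+1 - 1 = b - a - 1 by lia. apply.
  move=> k h1 h2. exact: (hk k.+1).
Qed.

Lemma valid_true w : valid (true :: w) <-> valid w /\ firstc 0 w.
Proof.
split.
- move=> H; split.
  + move=> a b hab hb ha hb' hk. have := H a.+1 b.+1 hab hb ha hb'.
    have -> : b.+1 - a.+1 - 1 = b - a - 1 by lia. apply.
    move=> k h1 h2. case: k h1 h2 => [|k] h1 h2 //=. apply: hk; lia.
  + move=> b hb hb' hk. have := H 0 b.+1 (ltn0Sn _) hb isT hb'.
    have -> : b.+1 - 0 - 1 = 0 + b by lia. apply.
    move=> k h1 h2. case: k h1 h2 => [|k] h1 h2 //=. apply: hk; lia.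
- move=> [H1 H2] [|a] [|b] hab hb ha hb' hk //=.
  + have -> : b.+1 - 0 - 1 = 0 + b by lia. apply: H2 => // k hk'. exact: (hk k.+1).
  + have := H1 a b hab hb ha hb'. have -> : b.+1 - a.+1 - 1 = b - a - 1 by lia. apply.
    move=> k h1 h2. exact: (hk k.+1).
Qed.

Lemma firstc_false d w : firstc d (false :: w) <-> firstc d.+1 w.
Proof.
split.
- move=> H b hb hb' hk. have := H b.+1 hb hb'. have -> : d + b.+1 = d.+1 + b by lia. apply.
  move=> k hk'. case: k hk' => [|k] hk' //=. apply: hk; lia.
- move=> H [|b] hb hb' hk //=. have := H b hb hb'. have -> : d + b.+1 = d.+1 + b by lia. apply.
  move=> k hk'. exact: (hk k.+1).
Qed.

Lemma firstc_true d w : firstc d (true :: w) <-> S d.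
Proof.
split.
- move=> H. have := H 0 (ltn0Sn _) isT. rewrite addn0. apply. by [].
- move=> h [|b] hb hb' hk //=. by rewrite addn0. by have := hk 0 (ltn0Sn _).
Qed.

Lemma vB_sem d w : vB P d w <-> valid w /\ firstc d w.
Proof.
elim: w d => [|b w IH] d /=.
  split=> [_|//]; split; [exact: valid_nil | by move=> b].
case: b.
- rewrite valid_true firstc_true. split.
  + case/andP => /pboolP hs /IH [h1 h2]. by [].
  + case=> [[h1 h2] h3]. apply/andP; split; first by apply/pboolP.
    by apply/IH.
- rewrite valid_false firstc_false. exact: IH.
Qed.

Lemma vZ_sem w : vZ P w <-> valid w.
Proof.
elim: w => [|b w IH] /=.
  split=> [_|//]; exact: valid_nil.
case: b.
- rewrite valid_true. exact: vB_sem.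
- rewrite valid_false. exact: IH.
Qed.
End Sem.

End MCount.
Import MCount.

Module MOcc.
Local Open Scope nat_scope.

Section Occ.
Variable S : nat -> Prop.

Lemma occurs_valid n (w : n.-tuple bool) : occurs (gap_shift S) w <-> valid S w.
Proof.
split.
- case=> x [hx [i hi]] a b hab hb ha hb' hk.
  rewrite size_tuple in hb.
  have hxa : x (i + Z.of_nat a)%Z = true.
    have h := hi (Ordinal (ltn_trans hab hb)). by rewrite (tnth_nth false) /= in h; rewrite h.
  have hxb : x (i + Z.of_nat b)%Z = true.
    have h := hi (Ordinal hb). by rewrite (tnth_nth false) /= in h; rewrite h.
  have := hx (i + Z.of_nat a)%Z (i + Z.of_nat b)%Z ltac:(lia) hxa hxb.
  have -> : Z.to_nat (i + Z.of_nat b - (i + Z.of_nat a) - 1) = (b - a - 1)%N by lia.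
  apply. move=> k hk'.
  have hkk : (a < Z.to_nat (k - i))%N /\ (Z.to_nat (k - i) < b)%N by lia.
  have e : k = (i + Z.of_nat (Z.to_nat (k - i)))%Z by lia.
  have hkn : (Z.to_nat (k - i) < n)%N by lia.
  have h := hi (Ordinal hkn). rewrite (tnth_nth false) /= in h.
  rewrite e h. apply: hk; by case: hkk.
- move=> hv.
  set x := fun z : Z => if ((0 <=? z) && (z <? Z.of_nat n))%Z then nth false w (Z.to_nat z) else false.
  exists x; split.
  + move=> i j hij hi hj hk.
    rewrite /x in hi hj.
    case hri: ((0 <=? i) && (i <? Z.of_nat n))%Z in hi; last done.
    case hrj: ((0 <=? j) && (j <? Z.of_nat n))%Z in hj; last done.
    move/andP: hri => [/Z.leb_le hi1 /Z.ltb_lt hi2].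
    move/andP: hrj => [/Z.leb_le hj1 /Z.ltb_lt hj2].
    have := hv (Z.to_nat i) (Z.to_nat j) ltac:(lia) ltac:(rewrite size_tuple; lia) hi hj.
    have -> : (Z.to_nat j - Z.to_nat i - 1)%N = Z.to_nat (j - i - 1) by lia.
    apply. move=> k h1 h2.
    have := hk (Z.of_nat k) ltac:(lia). rewrite /x.
    have -> : ((0 <=? Z.of_nat k) && (Z.of_nat k <? Z.of_nat n))%Z = true.
      apply/andP; split; [apply/Z.leb_le | apply/Z.ltb_lt]; lia.
    by rewrite Nat2Z.id.
  + exists 0%Z => k. rewrite /x (tnth_nth false).
    have -> : ((0 <=? 0 + Z.of_nat k) && (0 + Z.of_nat k <? Z.of_nat n))%Z = true.
      apply/andP; split; [apply/Z.leb_le | apply/Z.ltb_lt]; have := ltn_ord k; lia.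
    congr nth. lia.
Qed.

Lemma nwords_eq n : nwords (gap_shift S) n = cnt (vZ (P S)) n.
Proof.
rewrite /nwords /cnt.
have -> : [set w : n.-tuple bool | pbool (occurs (gap_shift S) w)] = [set w : n.-tuple bool | vZ (P S) w].
  apply/setP => w. rewrite !inE. apply/idP/idP.
  - move/pboolP/occurs_valid => h. by apply/vZ_sem.
  - move/vZ_sem => h. apply/pboolP. by apply/occurs_valid.
done.
Qed.
End Occ.

End MOcc.
Import MOcc.

Module MBounds.
Local Open Scope nat_scope.

Local Open Scope R_scope.

Section Bnd.
Variable Pd : nat -> bool.

Fixpoint Phi (x : R) (d n : nat) : R :=
  match n with 0 => 0 | S n' => (if Pd d then 1 else 0) + / x * Phi x d.+1 n' end.

Lemma Phi_nonneg x d n : 0 < x -> 0 <= Phi x d n.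
Proof.
move=> hx. elim: n d => [|n IH] d /=; first lra.
have := IH d.+1. have : 0 < / x by apply: Rinv_0_lt_compat.
case: (Pd d); nra.
Qed.

Lemma Phi_psum x d n : 1 < x -> Phi x d n = x ^ d.+1 * (psum x Pd (d + n) - psum x Pd d).
Proof.
move=> hx. elim: n d => [|n IH] d /=.
  rewrite addn0. ring.
rewrite IH. have -> : (d.+1 + n)%N = (d + n.+1)%N by lia.
have e : psum x Pd d.+1 = psum x Pd d + term x Pd d by [].
rewrite e /term.
have hx0 : x <> 0 by lra.
have hp : x ^ d <> 0 by apply: pow_nonzero.
rewrite [x ^ d.+2]/= [x ^ d.+1]/=. case: (Pd d); field; auto.
Qed.

Lemma Phi0 x n : 1 < x -> Phi x 0 n = x * psum x Pd n.
Proof. move=> hx. rewrite Phi_psum // add0n /=. ring. Qed.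

Notation B d n := (INR (cnt (vB Pd d) n)).
Notation Z n := (INR (cnt (vZ Pd) n)).

Lemma B_S d n : B d n.+1 = B d.+1 n + (if Pd d then B 0 n else 0).
Proof. rewrite cntB_S plus_INR. by case: (Pd d). Qed.

Lemma Z_S n : Z n.+1 = B 0 n + Z n.
Proof. by rewrite cntZ_S plus_INR. Qed.

Section Up.
Variable mu : R.
Hypothesis hmu : 1 < mu.
Hypothesis HU : forall m, psum mu Pd m <= 1.

Lemma B_up n : forall d, mu * B d n <= mu + INR n * mu ^ n * Phi mu d n.
Proof.
elim: n => [|n IH] d.
  rewrite cntB_0 /=. lra.
rewrite B_S.
have h1 := IH d.+1.
have h0 := IH 0%N. rewrite Phi0 // in h0.
have hps := HU n.
have hpn := pow_lt mu n ltac:(lra).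
have hpn1 : 1 <= mu ^ n by apply: pow_R1_Rle; lra.
have hn := pos_INR n.
have hPhi := Phi_nonneg mu d.+1 n ltac:(lra).
have hB0 : B 0 n <= 1 + INR n * mu ^ n.
  have : INR n * mu ^ n * (mu * psum mu Pd n) <= INR n * mu ^ n * mu.
    apply: Rmult_le_compat_l; first nra. nra.
  nra.
rewrite S_INR /=.
have hinv : mu * / mu = 1 by field; lra.
case: (Pd d).
- have e : (INR n + 1) * (mu * mu ^ n) * (1 + / mu * Phi mu d.+1 n) =
           (INR n + 1) * (mu * mu ^ n) + (INR n + 1) * mu ^ n * Phi mu d.+1 n.
    field; lra.
  rewrite e. nra.
- have e : (INR n + 1) * (mu * mu ^ n) * (0 + / mu * Phi mu d.+1 n) =
           (INR n + 1) * mu ^ n * Phi mu d.+1 n.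
    field; lra.
  rewrite e. nra.
Qed.

Lemma Z_up n : Z n <= (INR n + 1) ^ 2 * mu ^ n.
Proof.
elim: n => [|n IH]; first by rewrite cntZ_0 /=; lra.
rewrite Z_S.
have h0 := B_up n 0. rewrite Phi0 // in h0.
have hps := HU n.
have hpn := pow_lt mu n ltac:(lra).
have hpn1 : 1 <= mu ^ n by apply: pow_R1_Rle; lra.
have hn := pos_INR n.
have hB0 : B 0 n <= 1 + INR n * mu ^ n.
  have : INR n * mu ^ n * (mu * psum mu Pd n) <= INR n * mu ^ n * mu.
    apply: Rmult_le_compat_l; first nra. nra.
  nra.
rewrite S_INR /=.
have : (INR n + 1 + 1) * ((INR n + 1 + 1) * 1) * mu ^ n <= (INR n + 1 + 1) * ((INR n + 1 + 1) * 1) * (mu * mu ^ n).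
  apply: Rmult_le_compat_l; nra.
nra.
Qed.
End Up.

Section Low.
Variable lam : R.
Hypothesis hlam : 1 < lam.
Hypothesis HL : forall m, 1 - / lam ^ m / (lam - 1) <= psum lam Pd m.
Let al := (lam - 1) / lam.

Lemma B_low n : forall d, 1 + al * lam ^ n * Phi lam d n <= B d n.
Proof.
elim: n => [|n IH] d.
  rewrite cntB_0 /=. lra.
rewrite B_S.
have h1 := IH d.+1.
have h0 := IH 0%N. rewrite Phi0 // in h0.
have hps := HL n.
have hpn := pow_lt lam n ltac:(lra).
have hB0 : al * lam ^ n.+1 <= B 0 n.
  have e : al * lam ^ n * (lam * (1 - / lam ^ n / (lam - 1))) = al * lam ^ n.+1 - 1.
    rewrite /al /=. field. split; lra.
  have : al * lam ^ n * (lam * (1 - / lam ^ n / (lam - 1))) <= al * lam ^ n * (lam * psum lam Pd n).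
    apply: Rmult_le_compat_l. rewrite /al. apply: Rmult_le_pos; last lra.
      apply: Rmult_le_pos; [lra| apply: Rlt_le; apply: Rinv_0_lt_compat; lra].
    apply: Rmult_le_compat_l; lra.
  lra.
have hal : 0 < al by rewrite /al; apply: Rdiv_lt_0_compat; lra.
rewrite [Phi _ _ n.+1]/= [lam ^ n.+1]/=. rewrite [lam ^ n.+1]/= in hB0.
case: (Pd d) => /=.
- have e : al * (lam * lam ^ n) * (1 + / lam * Phi lam d.+1 n) =
           al * (lam * lam ^ n) + al * lam ^ n * Phi lam d.+1 n.
    field; lra.
  rewrite e. lra.
- have e : al * (lam * lam ^ n) * (0 + / lam * Phi lam d.+1 n) = al * lam ^ n * Phi lam d.+1 n.
    field; lra.
  rewrite e. lra.
Qed.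

Lemma Z_low n : al * lam ^ n.+1 <= Z n.+1.
Proof.
rewrite Z_S.
have h0 := B_low n 0. rewrite Phi0 // in h0.
have hps := HL n.
have hpn := pow_lt lam n ltac:(lra).
have e : al * lam ^ n * (lam * (1 - / lam ^ n / (lam - 1))) = al * lam ^ n.+1 - 1.
  rewrite /al /=. field. split; lra.
have : al * lam ^ n * (lam * (1 - / lam ^ n / (lam - 1))) <= al * lam ^ n * (lam * psum lam Pd n).
  apply: Rmult_le_compat_l. rewrite /al. apply: Rmult_le_pos; last lra.
    apply: Rmult_le_pos; [lra| apply: Rlt_le; apply: Rinv_0_lt_compat; lra].
  apply: Rmult_le_compat_l; lra.
have := pos_INR (cnt (vZ Pd) n).
lra.
Qed.
End Low.
End Bnd.

End MBounds.
Import MBounds.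

Module MEnt.
Local Open Scope nat_scope.

Local Open Scope R_scope.

Lemma ln2_pos : 0 < ln 2.
Proof. rewrite -ln_1. apply: ln_increasing; lra. Qed.

Lemma inv_n_lim : is_lim_seq (fun n => / INR n.+1) 0.
Proof.
have h : is_lim_seq (fun n => INR n.+1) p_infty by apply/(is_lim_seq_incr_1 INR); exact: is_lim_seq_INR.
have := is_lim_seq_inv _ _ h ltac:(discriminate). done.
Qed.

Lemma ln_n_lim : is_lim_seq (fun n => ln (INR n.+1) / INR n.+1) 0.
Proof.
have h : is_lim_seq (fun n => INR n.+1) p_infty by apply/(is_lim_seq_incr_1 INR); exact: is_lim_seq_INR.
apply: (is_lim_comp_seq (fun y => ln y / y) _ p_infty 0) => //.
  exact: is_lim_div_ln_p.
by exists 0%N.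
Qed.

Definition rr (n : nat) : R := log2 (4 * INR n.+1 ^ 2) / INR n.+1.

Lemma rr_lim : is_lim_seq rr 0.
Proof.
have h1 : is_lim_seq (fun n => ln 4 / ln 2 * / INR n.+1) 0.
  by have := is_lim_seq_scal_l _ (ln 4 / ln 2) _ inv_n_lim; rewrite Rbar_mult_0_r.
have h2 : is_lim_seq (fun n => 2 / ln 2 * (ln (INR n.+1) / INR n.+1)) 0.
  by have := is_lim_seq_scal_l _ (2 / ln 2) _ ln_n_lim; rewrite Rbar_mult_0_r.
have := is_lim_seq_plus' _ _ _ _ h1 h2. rewrite Rplus_0_r.
apply: is_lim_seq_ext => n. rewrite /rr /log2.
have hn : 0 < INR n.+1 by apply: lt_0_INR; lia.
rewrite ln_mult; [|lra|apply: pow_lt; lra]. rewrite ln_pow //.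
have := ln2_pos. move=> h. rewrite [INR 2]/=. field. lra.
Qed.

Definition ss (lam : R) (n : nat) : R := log2 ((lam - 1) / lam) / INR n.+1.

Lemma ss_lim lam : is_lim_seq (ss lam) 0.
Proof.
have := is_lim_seq_scal_l _ (log2 ((lam - 1) / lam)) _ inv_n_lim. rewrite Rbar_mult_0_r.
apply: is_lim_seq_ext => n. rewrite /ss. field. have : 0 < INR n.+1 by apply: lt_0_INR; lia. lra.
Qed.

Definition ent_seq (S : nat -> Prop) (n : nat) : R := log2 (INR (nwords (gap_shift S) n.+1)) / INR n.+1.

Lemma log2_mono a b : 0 < a -> a <= b -> log2 a <= log2 b.
Proof.
move=> ha hab. rewrite /log2 /Rdiv. apply: Rmult_le_compat_r.
  apply: Rlt_le; apply: Rinv_0_lt_compat; exact: ln2_pos.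
exact: ln_le.
Qed.

Lemma Z_ge1 Pd n : 1 <= INR (cnt (vZ Pd) n).
Proof.
elim: n => [|n IH]; first by rewrite cntZ_0 /=; lra.
rewrite Z_S. have := pos_INR (cnt (vB Pd 0) n). lra.
Qed.

Lemma ent_upper S mu : 1 < mu -> val mu (P S) <= 1 -> forall n, ent_seq S n <= log2 mu + rr n.
Proof.
move=> hmu hv n.
have HU : forall m, psum mu (P S) m <= 1.
  move=> m. have := psum_le_val mu hmu (P S) m. lra.
have hz := Z_up (P S) mu hmu HU n.+1.
have hz1 := Z_ge1 (P S) n.+1.
rewrite /ent_seq nwords_eq.
have hn : 0 < INR n.+1 by apply: lt_0_INR; lia.
have hp := pow_lt mu n.+1 ltac:(lra).
have : log2 (INR (cnt (vZ (P S)) n.+1)) <= log2 (4 * INR n.+1 ^ 2 * mu ^ n.+1).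
  apply: log2_mono; first lra. apply: (Rle_trans _ _ _ hz).
  apply: Rmult_le_compat_r; first lra.
  rewrite S_INR. have : 1 <= INR n.+1 by apply: (le_INR 1); lia. rewrite S_INR => h1. nra.
rewrite /log2 ln_mult; [|apply: Rmult_lt_0_compat; [lra|apply: pow_lt; lra]| exact: hp].
rewrite (ln_pow mu); last lra.
move=> h. rewrite /rr /log2.
have := ln2_pos => h2.
apply: (Rmult_le_reg_r (INR n.+1)) => //.
have e1 : ln (INR (cnt (vZ (P S)) n.+1)) / ln 2 / INR n.+1 * INR n.+1 = ln (INR (cnt (vZ (P S)) n.+1)) / ln 2 by field; lra.
have e2 : (ln mu / ln 2 + ln (4 * INR n.+1 ^ 2) / ln 2 / INR n.+1) * INR n.+1 =
   (ln (4 * INR n.+1 ^ 2) + INR n.+1 * ln mu) / ln 2.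
  field. lra.
lra.
Qed.

Lemma ent_lower S lam : 1 < lam -> 1 <= val lam (P S) -> forall n, log2 lam + ss lam n <= ent_seq S n.
Proof.
move=> hl hv n.
have HL : forall m, 1 - / lam ^ m / (lam - 1) <= psum lam (P S) m.
  move=> m. have e := val_decomp lam hl (P S) m.
  have hb := val_bounds lam hl (shift m (P S)).
  have hi : 0 < / lam ^ m by apply: Rinv_0_lt_compat; apply: pow_lt; lra.
  have : / lam ^ m * val lam (shift m (P S)) <= / lam ^ m / (lam - 1).
    rewrite /Rdiv. apply: Rmult_le_compat_l; lra.
  lra.
have hz := Z_low (P S) lam hl HL n.
rewrite /ent_seq nwords_eq /ss.
have hal : 0 < (lam - 1) / lam by apply: Rdiv_lt_0_compat; lra.
have hp := pow_lt lam n.+1 ltac:(lra).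
have hn : 0 < INR n.+1 by apply: lt_0_INR; lia.
have := log2_mono _ _ (Rmult_lt_0_compat _ _ hal hp) hz.
rewrite /log2 ln_mult // (ln_pow lam); last lra.
move=> h. have := ln2_pos => h2.
apply: (Rmult_le_reg_r (INR n.+1)) => //.
have e1 : ln (INR (cnt (vZ (P S)) n.+1)) / ln 2 / INR n.+1 * INR n.+1 = ln (INR (cnt (vZ (P S)) n.+1)) / ln 2 by field; lra.
have e2 : (ln lam / ln 2 + ln ((lam - 1) / lam) / ln 2 / INR n.+1) * INR n.+1 =
   (ln ((lam - 1) / lam) + INR n.+1 * ln lam) / ln 2.
  field. lra.
lra.
Qed.

Lemma lim_contra_up (a r : nat -> R) (l b : R) :
  is_lim_seq a l -> (forall n, a n <= b + r n) -> is_lim_seq r 0 -> b < l -> False.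
Proof.
move=> ha hle hr hb.
have hbr : is_lim_seq (fun n => b + r n) (b + 0) := is_lim_seq_plus' _ _ _ _ (is_lim_seq_const b) hr.
have := is_lim_seq_le _ _ _ _ hle ha hbr. rewrite /=. lra.
Qed.

Lemma lim_contra_low (a r : nat -> R) (l b : R) :
  is_lim_seq a l -> (forall n, b + r n <= a n) -> is_lim_seq r 0 -> l < b -> False.
Proof.
move=> ha hle hr hb.
have hbr : is_lim_seq (fun n => b + r n) (b + 0) := is_lim_seq_plus' _ _ _ _ (is_lim_seq_const b) hr.
have := is_lim_seq_le _ _ _ _ hle hbr ha. rewrite /=. lra.
Qed.

Lemma near_below lam e : 1 < lam -> 0 < e -> exists mu, 1 < mu < lam /\ / (mu - 1) - / (lam - 1) < e.
Proof.
move=> hl he.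
set d := Rmin ((lam - 1) / 2) (e * (lam - 1) ^ 2 / 4).
have hd : 0 < d by apply: Rmin_pos; [lra | apply: Rdiv_lt_0_compat; [apply: Rmult_lt_0_compat => //; apply: pow_lt; lra | lra]].
have hd1 : d <= (lam - 1) / 2 by apply: Rmin_l.
have hd2 : d <= e * (lam - 1) ^ 2 / 4 by apply: Rmin_r.
exists (lam - d); split; first lra.
have eq : / (lam - d - 1) - / (lam - 1) = d / ((lam - d - 1) * (lam - 1)) by field; lra.
rewrite eq.
have hp : (lam - 1) ^ 2 / 2 <= (lam - d - 1) * (lam - 1) by rewrite /=; nra.
have hp0 : 0 < (lam - 1) ^ 2 / 2 by apply: Rdiv_lt_0_compat; [apply: pow_lt; lra | lra].
apply: (Rle_lt_trans _ (d / ((lam - 1) ^ 2 / 2))).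
  apply: Rmult_le_compat_l; first lra. apply: Rinv_le_contravar => //.
apply: (Rmult_lt_reg_r ((lam - 1) ^ 2 / 2)) => //.
rewrite /Rdiv Rmult_assoc Rinv_l; last lra. nra.
Qed.

Lemma near_above lam e : 1 < lam -> 0 < e -> exists mu, lam < mu /\ / (lam - 1) - / (mu - 1) < e.
Proof.
move=> hl he.
set d := e * (lam - 1) ^ 2 / 2.
have hp0 : 0 < (lam - 1) ^ 2 by apply: pow_lt; lra.
have hd : 0 < d by apply: Rdiv_lt_0_compat; [apply: Rmult_lt_0_compat => // | lra].
exists (lam + d); split; first lra.
have eq : / (lam - 1) - / (lam + d - 1) = d / ((lam - 1) * (lam + d - 1)) by field; lra.
rewrite eq.
have hp : (lam - 1) ^ 2 <= (lam - 1) * (lam + d - 1) by rewrite /=; nra.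
apply: (Rle_lt_trans _ (d / ((lam - 1) ^ 2))).
  apply: Rmult_le_compat_l; first lra. apply: Rinv_le_contravar => //.
apply: (Rmult_lt_reg_r ((lam - 1) ^ 2)) => //.
rewrite /Rdiv Rmult_assoc Rinv_l; last lra. rewrite /d. nra.
Qed.

Lemma log2_strict a b : 0 < a -> a < b -> log2 a < log2 b.
Proof.
move=> ha hab. rewrite /log2 /Rdiv. apply: Rmult_lt_compat_r.
  apply: Rinv_0_lt_compat; exact: ln2_pos.
exact: ln_increasing.
Qed.

Theorem ent_char S lam : 1 < lam -> (has_entropy (gap_shift S) (log2 lam) <-> val lam (P S) = 1).
Proof.
move=> hl. split.
- move=> /is_lim_seq_Reals H.
  case: (Rtotal_order (val lam (P S)) 1) => [hlt|[//|hgt]].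
  + have [mu [hmu hd]] := near_below lam (1 - val lam (P S)) hl ltac:(lra).
    have := val_lip mu lam (P S) ltac:(lra).
    move=> hv. exfalso.
    apply: (lim_contra_up _ _ _ (log2 mu) H (ent_upper S mu ltac:(lra) ltac:(lra)) rr_lim).
    apply: log2_strict; lra.
  + have [mu [hmu hd]] := near_above lam (val lam (P S) - 1) hl ltac:(lra).
    have := val_lip lam mu (P S) ltac:(lra).
    move=> hv. exfalso.
    apply: (lim_contra_low _ _ _ (log2 mu) H (ent_lower S mu ltac:(lra) ltac:(lra)) (ss_lim mu)).
    apply: log2_strict; lra.
- move=> hv. apply/is_lim_seq_Reals.
  apply: (is_lim_seq_le_le (fun n => log2 lam + ss lam n) _ (fun n => log2 lam + rr n)).
  + move=> n; split; [apply: ent_lower; lra | apply: ent_upper; lra].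
  + have := is_lim_seq_plus' _ _ _ _ (is_lim_seq_const (log2 lam)) (ss_lim lam). by rewrite Rplus_0_r.
  + have := is_lim_seq_plus' _ _ _ _ (is_lim_seq_const (log2 lam)) rr_lim. by rewrite Rplus_0_r.
Qed.

End MEnt.
Import MEnt.


Local Open Scope R_scope.

Lemma X_eq (X : (Z -> bool) -> Prop) S : (forall x, X x <-> gap_shift S x) -> X = gap_shift S.
Proof.
move=> H. apply: functional_extensionality => x. apply: propositional_extensionality. exact: H.
Qed.

Definition xs (s : nat) : Z -> bool := fun z => ((z =? 0) || (z =? Z.of_nat s.+1))%Z.

Lemma two_ones S s : gap_shift S (xs s) <-> S s.
Proof.
split.
- move=> H. have := H 0%Z (Z.of_nat s.+1) ltac:(lia).
  have -> : Z.to_nat (Z.of_nat s.+1 - 0 - 1) = s by lia.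
  apply; rewrite /xs.
  + by rewrite Z.eqb_refl.
  + by rewrite Z.eqb_refl orbT.
  + move=> k hk. apply/negbTE/negP => /orP [/Z.eqb_eq|/Z.eqb_eq]; lia.
- move=> hs i j hij hi hj hk.
  rewrite /xs in hi hj.
  have ei : i = 0%Z \/ i = Z.of_nat s.+1.
    case/orP: hi => /Z.eqb_eq; [left|right]; lia.
  have ej : j = 0%Z \/ j = Z.of_nat s.+1.
    case/orP: hj => /Z.eqb_eq; [left|right]; lia.
  have [-> ->] : i = 0%Z /\ j = Z.of_nat s.+1 by lia.
  by have -> : Z.to_nat (Z.of_nat s.+1 - 0 - 1) = s by lia.
Qed.

Lemma P_of_seq (c : sq) : P (fun s => c s = true) = c.
Proof.
apply: functional_extensionality => s. rewrite /P.
case h: (c s). by apply/pboolP. apply/negbTE/negP => /pboolP => h2. by rewrite h2 in h.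
Qed.

Lemma val_zero l : 1 < l -> val l (fun _ => false) = 0.
Proof.
move=> hl. rewrite /val /term /=.
have -> : (fun _ : nat => 0) = (fun n : nat => 0 * 0) by apply: functional_extensionality => n; ring.
rewrite Series_scal_l. ring.
Qed.

Lemma val1_has_one l c : 1 < l -> val l c = 1 -> exists j, c j = true.
Proof.
move=> hl hv. apply: NNPP => hn.
have e : c = (fun _ => false).
  apply: functional_extensionality => j. case h: (c j) => //. by exfalso; apply: hn; exists j.
rewrite e val_zero in hv; lra.
Qed.

Lemma gap_shift_ext S1 S2 : (forall s, S1 s <-> S2 s) -> forall x, gap_shift S1 x <-> gap_shift S2 x.
Proof.
move=> H x. split => h i j hij hi hj hk; apply/H; exact: h.
Qed.

Lemma log2_2 : log2 2 = 1.
Proof. rewrite /log2. have := ln2_pos. move=> h. field. lra. Qed.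

Lemma log2_1 : log2 1 = 0.
Proof. by rewrite /log2 ln_1 /Rdiv Rmult_0_l. Qed.

Theorem theorem4p9 :
  exists lamKL : R,
    (1 < lamKL < 2)%R /\ TM_equation lamKL /\
    (forall mu : R, (1 < mu < 2)%R -> TM_equation mu -> mu = lamKL) /\
    (0 < log2 lamKL < 1)%R /\
    unique_gap_shift_with_entropy (log2 lamKL) /\
    (forall q : R, (0 < q < 1)%R -> unique_gap_shift_with_entropy q ->
       (log2 lamKL <= q)%R).
Proof.
have [L [[hL1 hL2] hLt]] := lamKL_exists.
have hL : 1 < L by lra.
exists L. split; first lra.
split; first by apply/TM_iff.
split.
  move=> mu hmu /(TM_iff mu ltac:(lra)) hv.
  case: (Rtotal_order mu L) => [h|[//|h]].
  - have := val_strict mu L t 0 ltac:(lra) t0. lra.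
  - have := val_strict L mu t 0 ltac:(lra) t0. lra.
split.
  split.
  - rewrite -log2_1. apply: log2_strict; lra.
  - rewrite -log2_2. apply: log2_strict; lra.
split.
-
  set St := fun s => t s = true.
  exists (gap_shift St). split.
    exists St; split; first by exists 0%N; exact: t0.
    done.
  split.
    apply/ent_char => //. by rewrite /St P_of_seq.
  move=> Y [S' [hne hY]] hent x.
  rewrite (X_eq _ _ hY) in hent *.
  move/(ent_char _ _ hL): hent => hv.
  have e := t_unique L hL hLt _ hv.
  apply: gap_shift_ext => s. rewrite /St -e. split; by move/pboolP.
-
  move=> q hq [X [[S [hne hX]] [hent U]]].
  apply: Rnot_lt_le => hlt.
  set lam := exp (q * ln 2).
  have hlq : log2 lam = q by rewrite /log2 /lam ln_exp; have := ln2_pos; move=> h; field; lra.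
  have hl1 : 1 < lam.
    rewrite /lam -exp_0. apply: exp_increasing. have := ln2_pos. nra.
  have hlL : lam < L.
    apply: Rnot_le_lt => h. have := log2_mono L lam ltac:(lra) h. lra.
  rewrite (X_eq _ _ hX) -hlq in hent.
  move/(ent_char _ _ hl1): hent => hv.
  apply: (nonunique_false lam L hl1 hlL ltac:(lra) hLt (P S) hv).
  move=> d hd.
  set Sd := fun s => d s = true.
  have hYd : has_entropy (gap_shift Sd) q.
    rewrite -hlq. apply/ent_char => //. by rewrite /Sd P_of_seq.
  have hYg : is_gap_shift (gap_shift Sd).
    exists Sd; split => //. have [j hj] := val1_has_one lam d hl1 hd. by exists j.
  have hU := U _ hYg hYd.
  have hSS : forall s, Sd s <-> S s.
    move=> s. rewrite -!two_ones. rewrite -hX. exact: hU.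
  rewrite -(P_of_seq d). apply: functional_extensionality => s.
  rewrite /P. congr pbool. apply: propositional_extensionality. exact: hSS.
Qed.
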